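(* Let $A$ be an absolutely simple abelian variety over a number field with complex multiplication by the CM type $(E,S)$, with reflex field $E^*$ and reflex norm $\Phi_{(E,S)}:T_{E^*}\to\operatorname{MT}(A)$. Let $C$ be the group of multiplicative type defined by the exact sequence $1\to C\to T_{E^*}\xrightarrow{\Phi_{(E,S)}}\operatorname{MT}(A)\to1$, and let $\hat C$ be its character group. If $\operatorname{MT}(A)$ has rank $r$, then the torsion subgroup of $\hat C$ has order at most $\left\lfloor 2^{-r}(r+1)^{(r+1)/2}\right\rfloor$.
   Context: With $\tilde E$ the Galois closure of $E$, $G=\operatorname{Gal}(\tilde E/\mathbb Q)$, $H=\operatorname{Gal}(\tilde E/E)$, $\operatorname{Hom}(E,\overline{\mathbb Q})=H\backslash G$, $S\subseteq H\backslash G$ the CM type (the embeddings through which $E$ acts on the tangent space at the origin), $\tilde S$ its preimage in $G$, $H'=\{g:\tilde Sg=\tilde S\}$: the reflex field $E^*$ is the fixed field of $H'$ and $R$ is the image of $\{s^{-1}:s\in\tilde S\}$ in $H'\backslash G$. For a number field $F$, $T_F=\operatorname{Res}_{F/\mathbb Q}\mathbb G_m$ with character group free on $\operatorname{Hom}(F,\overline{\mathbb Q})$. The reflex norm $\Phi_{(E,S)}:T_{E^*}\to T_E$ is given on characters by $[g]\mapsto\sum_{r\in R}[rg]$, and the Mumford–Tate torus $\operatorname{MT}(A)$ is its image. *)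

(* Defs.v *)
From HB Require Import structures.
From mathcomp Require Import all_boot all_order all_algebra all_fingroup all_field.
Set Implicit Arguments. Unset Strict Implicit. Unset Printing Implicit Defensive.
Import Order.TTheory GRing.Theory Num.Theory.

(** * Group-theoretic CM-type data (conventions of the paper).
    Right actions: (g * h) x = h (g x), so H\G = right cosets H :* g,
    the coset H :* g corresponding to the embedding x |-> g x of E. *)

Section GroupData.
Variable gT : finGroupType.
Local Open Scope group_scope.

Definition cm_preimage (S : {set {set gT}}) : {set gT} := \bigcup_(c in S) c.

Definition reflex_stab (G : {set gT}) (S : {set {set gT}}) : {set gT} :=
  [set g in G | cm_preimage S :* g == cm_preimage S].

(** R g : the set { r g : r in R } subset of H'\G, where R is the image of
    { s^-1 : s in S~ } in H'\G, and g is (a representative of) the coset c. *)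
Definition reflex_translate (G : {set gT}) (S : {set {set gT}}) (c : {set gT})
  : {set {set gT}} :=
  [set reflex_stab G S :* ((s^-1) * repr c) | s in cm_preimage S].

Definition is_CM_type (G H : {set gT}) (iota : gT) (S : {set {set gT}}) :=
  S \subset rcosets H G /\
  forall c, c \in rcosets H G -> ((c \in S) = ((c :* iota) \notin S)).

Definition primitive_CM_type (G H : {set gT}) (S : {set {set gT}}) :=
  [set g in G | g *: cm_preimage S == cm_preimage S] = H.

End GroupData.

Local Open Scope ring_scope.

(** Matrix of the reflex norm on character groups
    Phi^* : X(T_E) = Z^{H\G} -> X(T_{E*}) = Z^{H'\G},  [Hg] |-> sum_{r in R} [r g],
    acting on row vectors: rows indexed by H\G, columns by H'\G. *)
Definition reflex_norm_mx (gT : finGroupType) (G H : {set gT}) (S : {set {set gT}})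
  : 'M[int]_(#|rcosets H G|, #|rcosets (reflex_stab G S) G|) :=
  \matrix_(i, j) ((enum_val j \in reflex_translate G S (enum_val i)) : nat)%:Z.

(** Membership in the image Lambda = Phi^*(X(T_E)) (= X(MT(A)) inside X(T_{E*})). *)
Definition in_image (m n : nat) (M : 'M[int]_(m, n)) (y : 'rV[int]_n) : Prop :=
  exists u : 'rV[int]_m, y = u *m M.

(** y mod Lambda is a torsion element of the cokernel C^ = Z^n / Lambda. *)
Definition coker_torsion (m n : nat) (M : 'M[int]_(m, n)) (y : 'rV[int]_n) : Prop :=
  exists k : nat, (0 < k)%N /\ in_image M (k%:Z *: y).

Definition coker_torsion_order_le (m n : nat) (M : 'M[int]_(m, n)) (N : int) : Prop :=
  forall xs : seq 'rV[int]_n,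
    (forall x, x \in xs -> coker_torsion M x) ->
    (forall i j, (i < j < size xs)%N ->
        ~ in_image M (nth 0 xs i - nth 0 xs j)) ->
    ((size xs)%:Z <= N)%R.

Definition int_rank (m n : nat) (M : 'M[int]_(m, n)) : nat :=
  \rank (map_mx (fun z : int => z%:~R : rat) M).

Definition torsion_bound (r : nat) : int :=
  Num.floor ((2%:R : algC) ^- r * (sqrtC (r.+1)%:R) ^+ r.+1).

(** * Number-field side. L : a finite Galois extension of Q (a number field),
    tau : L -> algC a fixed embedding (L viewed inside Qbar). *)

(** F is totally real: every embedding F -> Qbar (all are of the form
    x |-> tau (sigma x), sigma in Gal(L/Q), as L/Q is normal) lands in R. *)
Definition totally_real (L : splittingFieldType rat) (tau : {rmorphism L -> algC})
  (F : {subfield L}) : Prop :=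
  forall (s : gal_of {:L}) x, x \in F -> tau (s x) \is Num.real.

Definition totally_imaginary (L : splittingFieldType rat) (tau : {rmorphism L -> algC})
  (F : {subfield L}) : Prop :=
  forall s : gal_of {:L}, exists2 x, x \in F & tau (s x) \isn't Num.real.

Definition is_CM_field (L : splittingFieldType rat) (tau : {rmorphism L -> algC})
  (E : {subfield L}) : Prop :=
  exists F : {subfield L},
    [/\ (F <= E)%VS, \dim E = (2 * \dim F)%N, totally_real tau F
      & totally_imaginary tau E].

Definition is_galois_closure (L : splittingFieldType rat) (E : {subfield L}) : Prop :=
  forall K : {subfield L}, galois 1%VS K -> (E <= K)%VS -> K = fullv :> {vspace L}.

(* Main.v *)
Require Import Defs.
From HB Require Import structures.
From mathcomp Require Import all_boot all_order all_algebra all_fingroup all_field.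
From mathcomp Require Import ring.
Set Implicit Arguments. Unset Strict Implicit. Unset Printing Implicit Defensive.
Import Order.TTheory GRing.Theory Num.Theory.
Local Open Scope ring_scope.

Section Had.
Variable R : realFieldType.

Definition nrm2 n (v : 'rV[R]_n) : R := (v *m v^T) 0 0.

Lemma nrm2E n (v : 'rV[R]_n) : nrm2 v = \sum_j v 0 j ^+ 2.
Proof. by rewrite /nrm2 mxE; apply: eq_bigr => j _; rewrite mxE expr2. Qed.

Lemma nrm2_ge0 n (v : 'rV[R]_n) : 0 <= nrm2 v.
Proof. by rewrite nrm2E sumr_ge0 // => j _; rewrite sqr_ge0. Qed.

Lemma nrm2_eq0 n (v : 'rV[R]_n) : nrm2 v = 0 -> v = 0.
Proof.
rewrite nrm2E => /eqP; rewrite psumr_eq0 => [|j _]; last by rewrite sqr_ge0.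
move=> /allP H; apply/rowP => j; rewrite mxE.
by have := H j (mem_index_enum j); rewrite sqrf_eq0 => /eqP.
Qed.

Lemma nrm2_orth n (q w : 'rV[R]_n) : q *m w^T = 0 -> nrm2 q <= nrm2 (q + w).
Proof.
move=> qw; have wq : w *m q^T = 0 by rewrite -[w](trmxK w) -trmx_mul qw trmx0.
rewrite /nrm2.
have -> : (q + w) *m (q + w)^T = q *m q^T + w *m w^T.
  by rewrite linearD /= mulmxDl !mulmxDr qw wq add0r addr0.
rewrite [X in _ <= X]mxE lerDl; exact: (nrm2_ge0 w).
Qed.

Lemma gram_hadamard k n (B : 'M[R]_(k, n)) :
  0 <= \det (B *m B^T) <= \prod_(i < k) nrm2 (row i B).
Proof.
elim: k B => [|k IH] B.
  by rewrite det_mx00 big_ord0 ler01 lexx.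
have -> : B = col_mx (usubmx (B : 'M_(1 + k, n))) (dsubmx (B : 'M_(1 + k, n))).
  by rewrite vsubmxK.
move: (usubmx _) (dsubmx _) => a C {B}.
have Hprod : \prod_(i < k.+1) nrm2 (row i (col_mx a C)) =
   nrm2 a * \prod_(i < k) nrm2 (row i C).
  rewrite big_ord_recl; congr (_ * _).
    have -> : (ord0 : 'I_k.+1) = lshift k (0 : 'I_1) by apply: val_inj.
    congr nrm2; apply: etrans (rowKu 0 a C) _.
    by apply/rowP => j; rewrite mxE; congr (a _ _); apply: val_inj; case: (_ : 'I_1) => [[]].
  apply: eq_bigr => i _.
  have -> : lift ord0 i = rshift 1 i by apply: val_inj.
  congr nrm2; exact: (rowKd i a C).
rewrite Hprod.
have prod_ge0 : 0 <= \prod_(i < k) nrm2 (row i C).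
  by apply: prodr_ge0 => i _; apply: nrm2_ge0.
set G := C *m C^T.
have /andP [G0 GP] := IH C.
have [detG0 | detGn0] := eqVneq (\det G) 0.
  suff -> : \det (col_mx a C *m (col_mx a C)^T) = 0.
    by rewrite lexx /= mulr_ge0 // nrm2_ge0.
  apply/eqP/det0P; move/eqP/det0P: detG0 => [v v0 vG].
  have vC : v *m C = 0.
    apply: nrm2_eq0; rewrite /nrm2 trmx_mul -mulmxA (mulmxA C) -/G.
    by rewrite mulmxA vG mul0mx mxE.
  exists (row_mx 0 v).
    by apply: contra v0 => /eqP; rewrite -row_mx0 => /eq_row_mx [_ ->].
  by rewrite mulmxA mul_row_col mul0mx vC addr0 mul0mx.
have uG : G \in unitmx by rewrite unitmxE unitfE.
set c := a *m C^T *m invmx G.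
set q := a - c *m C.
have qC : q *m C^T = 0.
  rewrite /q mulmxBl /c -!mulmxA mulVmx // mulmx1 subrr //.
pose E : 'M[R]_(1 + k) := block_mx 1%:M (- c) 0 1%:M.
have detE : \det E = 1 by rewrite det_ublock !det1 mulr1.
have EB : E *m col_mx a C = col_mx q C.
  by rewrite mul_block_col !mul1mx mul0mx add0r mulNmx.
have -> : \det (col_mx a C *m (col_mx a C)^T) =
          \det (E *m (col_mx a C *m (col_mx a C)^T) *m E^T).
  by rewrite !det_mulmx det_tr detE !mul1r mulr1.
have -> : E *m (col_mx a C *m (col_mx a C)^T) *m E^T =
   (E *m col_mx a C) *m (E *m col_mx a C)^T.
  by rewrite [in RHS]trmx_mul !mulmxA.
rewrite EB tr_col_mx mul_col_row qC.
have -> : C *m q^T = 0 by rewrite -[C](trmxK C) -trmx_mul qC trmx0.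
rewrite det_ublock det_mx11.
have Hq : (q *m q^T) 0 0 <= nrm2 a.
  have -> : a = q + c *m C by rewrite /q subrK.
  apply: nrm2_orth; by rewrite trmx_mul mulmxA qC mul0mx.
rewrite mulr_ge0 ?nrm2_ge0 //= ler_pM // nrm2_ge0 //.
Qed.

Lemma hadamard n (A : 'M[R]_n) : \det A ^+ 2 <= \prod_(i < n) nrm2 (row i A).
Proof.
have /andP [_ H] := gram_hadamard A.
by rewrite det_mulmx det_tr -expr2 in H.
Qed.
End Had.

Section B01.
Variable R : realFieldType.

Lemma pm1_bound n (P : 'M[R]_n) : (forall i j, P i j ^+ 2 = 1) ->
  \det P ^+ 2 <= n%:R ^+ n.
Proof.
move=> HP; apply: le_trans (hadamard P) _.
rewrite (eq_bigr (fun _ => n%:R)) ?prodr_const ?card_ord // => i _.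
rewrite nrm2E (eq_bigr (fun _ => 1)) ?sumr_const ?card_ord // => j _.
by rewrite mxE HP.
Qed.

Lemma det01_bound r (N : 'M[R]_r) : (forall i j, N i j = 0 \/ N i j = 1) ->
  4 ^+ r * \det N ^+ 2 <= (r.+1)%:R ^+ r.+1.
Proof.
move=> HN.
pose P : 'M[R]_(1 + r) := block_mx 1%:M (const_mx 1) (const_mx 1) (const_mx 1 - 2%:R *: N).
have -> : 4 ^+ r * \det N ^+ 2 = \det P ^+ 2.
  have -> : P = block_mx 1%:M 0 (const_mx 1) 1%:M *m
                block_mx 1%:M (const_mx 1) 0 (- (2%:R *: N)).
    rewrite mulmx_block /P !mul1mx !mul0mx !mulmx1 !addr0.
    congr block_mx; apply/matrixP => i j.
    by rewrite !mxE big_ord1 !mxE mulr1.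
  rewrite det_mulmx det_lblock det_ublock !det1 !mul1r.
  rewrite -scaleNr detZ exprMn -exprM mulnC exprM sqrrN.
  by congr (_ ^+ _ * _); rewrite expr2 -natrM.
apply: pm1_bound => i j; rewrite /P mxE.
case: (split i) => i'; rewrite mxE; case: (split j) => j'; rewrite !mxE.
- by rewrite (ord1 i') (ord1 j') eqxx expr1n.
- by rewrite expr1n.
- by rewrite expr1n.
- case: (HN i' j') => ->; first by rewrite mulr0 subr0 expr1n.
  by ring.
Qed.
End B01.

Lemma absz_mod_lt (a d : int) : d != 0 -> (`|(a %% d)%Z|%N < `|d|%N)%N.
Proof.
move=> d0; rewrite -ltz_nat !abszE ger0_norm ?modz_ge0 //; exact: ltz_mod.
Qed.

Lemma unit_det_abs n (L : 'M[int]_n) : L \in unitmx -> `|\det L|%N = 1%N.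
Proof.
move=> uL; have := congr1 determinant (mulmxV uL).
rewrite det_mulmx det1 => /(congr1 absz); rewrite abszM /= => /eqP.
by rewrite muln_eq1 => /andP [/eqP].
Qed.

Lemma lattice_count r (N : 'M[int]_r) (ys : seq 'rV[int]_r) :
  \det N != 0 ->
  (forall i j, (i < j < size ys)%N ->
     ~ exists u, nth 0 ys i - nth 0 ys j = u *m N) ->
  (size ys <= `|\det N|)%N.
Proof.
move=> dN Hys.
have [Lm uL [Rm uR [d _ EN]]] := int_Smith_normal_form N.
set D := \matrix_(i, j) _ in EN.
have ED : D = diag_mx (\row_(i < r) d`_i).
  by apply/matrixP => i j; rewrite !mxE.
have detN : \det N = \det Lm * \prod_(i < r) d`_i * \det Rm.
  by rewrite EN !det_mulmx ED det_diag; congr (_ * _ * _); apply: eq_bigr => i _; rewrite mxE.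
have dnz : forall i : 'I_r, d`_i != 0.
  move=> i; move: dN; rewrite detN -mulrA mulf_eq0 negb_or => /andP [_].
  rewrite mulf_eq0 negb_or => /andP [/prodf_neq0 H _]; exact: H.
have absdet : `|\det N|%N = (\prod_(i < r) absz (d`_i)%R)%N.
  rewrite detN !abszM unit_det_abs // unit_det_abs // mul1n muln1.
  by rewrite (big_morph absz abszM (erefl _)).
pose w (y : 'rV[int]_r) := y *m invmx Rm.
pose h (i : 'I_r) := absz (d`_i)%R.
pose di (i : 'I_r) : int := d`_i.
pose wi (y : 'rV[int]_r) (i : 'I_r) : int := (w y) 0 i.
have ltK : forall y i, (`|(wi y i %% di i)%Z|%N < h i)%N.
  by move=> y i; exact: (absz_mod_lt _ (dnz i)).
pose Key (y : 'rV[int]_r) : {dffun forall i : 'I_r, 'I_(h i)} :=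
  finfun (fun i => Ordinal (ltK y i)).
have KeyP : forall y1 y2, Key y1 = Key y2 -> exists u, y1 - y2 = u *m N.
  move=> y1 y2 Hk.
  have Hi : forall i, (di i %| (wi y1 i - wi y2 i)%R)%Z.
    move=> i; have := congr1 (fun f : {dffun forall i : 'I_r, 'I_(h i)} => val (f i)) Hk; rewrite /Key !ffunE /=.
    move=> /(congr1 Posz); rewrite !abszE !ger0_norm ?modz_ge0 ?(dnz i) // => Hm.
    by rewrite -eqz_mod_dvd; apply/eqP.
  pose q := \row_(i < r) ((wi y1 i - wi y2 i)%R %/ di i)%Z.
  have Ew : w y1 - w y2 = q *m D.
    apply/rowP => i; rewrite ED mul_mx_diag [RHS]mxE [q 0 i]mxE [(\row__ _) 0 i]mxE.
    have := divzK (Hi i); rewrite /wi /di => ->; by rewrite !mxE.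
  exists (q *m invmx Lm).
  have -> : y1 - y2 = (w y1 - w y2) *m Rm.
    by rewrite mulmxBl /w -!mulmxA !mulVmx // !mulmx1.
  by rewrite Ew EN !mulmxA -(mulmxA q (invmx Lm)) mulVmx // mulmx1.
have uK : uniq (map Key ys).
  apply/(uniqP (Key 0)) => i j; rewrite !inE size_map => Hi Hj.
  rewrite !(nth_map 0) // => /KeyP Hu.
  apply/eqP; apply: contraT => nij.
  case: (ltngtP i j) => [ij|ji|eij]; last by rewrite eij eqxx in nij.
  - by case: (Hys i j _ Hu); rewrite ij.
  - case: (Hys j i); first by rewrite ji.
    case: Hu => u Hu; exists (- u); by rewrite mulNmx -Hu opprB.
rewrite absdet -(size_map Key) -(card_uniqP uK).
apply: leq_trans (max_card _) _.
rewrite card_dep_ffun foldrE big_map big_enum /=.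
by rewrite leq_eqVlt; apply/orP; left; apply/eqP; apply: eq_bigr => i _; rewrite card_ord.
Qed.

Lemma colsubB m n n' (g : 'I_n' -> 'I_n) (x y : 'M[int]_(m, n)) :
  colsub g (x - y) = colsub g x - colsub g y.
Proof. by apply/matrixP => i j; rewrite !mxE. Qed.

Lemma tors_sub m n (M : 'M[int]_(m, n)) x y :
  coker_torsion M x -> coker_torsion M y -> coker_torsion M (x - y).
Proof.
move=> [k1 [k1p [a Ha]]] [k2 [k2p [b Hb]]].
exists (k1 * k2)%N; split; first by rewrite muln_gt0 k1p.
exists (k2%:Z *: a - k1%:Z *: b).
rewrite mulmxBl -!scalemxAl -Ha -Hb !scalerA PoszM scalerBr; congr (_ *: _ - _).
by rewrite mulrC.
Qed.

Lemma main_gen m n (M : 'M[int]_(m, n)) :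
  (forall i j, M i j = 0 \/ M i j = 1) ->
  coker_torsion_order_le M (torsion_bound (int_rank M)).
Proof.
move=> H01.
set Mq := map_mx (fun z : int => z%:~R : rat) M.
rewrite /int_rank -/Mq.
set r := \rank Mq.
pose f0 := maxrankfun Mq.
pose A := rowsub f0 Mq.
have rkA : \rank A = r by apply: eqmx_rank; apply/eqmxP; exact: (eq_maxrowsub Mq).
have rfAT : row_full A^T by rewrite /row_full mxrank_tr rkA.
pose g := fullrankfun rfAT.
pose N := mxsub f0 g M.
pose Nq := mxsub f0 g Mq.
have uNq : Nq \in unitmx.
  rewrite -unitmx_tr; have := fullrowsub_unit rfAT.
  congr (_ \in unitmx); apply/matrixP => i j; rewrite !mxE //.
have NqE : Nq = map_mx (fun z : int => z%:~R : rat) N.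
  by apply/matrixP => i j; rewrite !mxE.
have detNq : \det Nq = (\det N)%:~R by rewrite NqE det_map_mx.
have dN : \det N != 0.
  by move: uNq; rewrite unitmxE unitfE detNq intr_eq0.
have K : forall z u, coker_torsion M z -> colsub g z = u *m N -> in_image M z.
  move=> z u [k [k0 [w Hw]]] Hc.
  pose v := u *m rowsub f0 1%:M.
  have vM : v *m M = u *m rowsub f0 M by rewrite -mulmxA -rowsubE.
  suff z0 : z - v *m M = 0.
    by exists v; apply/eqP; rewrite -subr_eq0; apply/eqP.
  set z' := z - v *m M.
  have Hz' : k%:Z *: z' = (w - k%:Z *: v) *m M.
    by rewrite /z' scalerBr Hw mulmxBl scalemxAl.
  have cz' : colsub g z' = 0.
    rewrite colsubB vM -mulmx_colsub.
    have -> : colsub g (rowsub f0 M) = N by apply/matrixP => i j; rewrite !mxE.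
    by rewrite Hc subrr.
  pose Z := map_mx (fun z : int => z%:~R : rat) z'.
  have HZ : (k%:R : rat) *: Z = map_mx (fun z : int => z%:~R : rat) (w - k%:Z *: v) *m Mq.
    by rewrite -map_mxM -Hz' map_mxZ.
  have : ((k%:R : rat) *: Z <= A)%MS.
    rewrite HZ (eq_maxrowsub Mq); exact: submxMl.
  case/submxP => t Ht.
  have : t *m Nq = 0.
    have -> : t *m Nq = colsub g (t *m A).
      by rewrite -mulmx_colsub; congr (_ *m _); apply/matrixP => i j; rewrite !mxE.
    rewrite -Ht; apply/matrixP => i j; rewrite !mxE.
    have := congr1 (fun X : 'rV[int]_(\rank Mq) => X i j) cz'; rewrite !mxE => ->.
    by rewrite mulr0.
  move=> /(congr1 (mulmx^~ (invmx Nq))); rewrite -mulmxA mulmxV // mulmx1 mul0mx.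
  move=> t0; move: Ht; rewrite t0 mul0mx => /eqP; rewrite scalemx_eq0.
  rewrite pnatr_eq0 eqn0Ngt k0 /= => /eqP Z0.
  apply/matrixP => i j; have := congr1 (fun X : 'rV[rat]_n => X i j) Z0; rewrite !mxE.
  by move/eqP; rewrite intr_eq0 => /eqP.
move=> xs Htor Hdist.
have Hsz : (size xs <= `|\det N|)%N.
  rewrite -(size_map (colsub g)); apply: lattice_count => // i j /andP [ij jlt] [u Hu].
  rewrite size_map in jlt.
  have ilt : (i < size xs)%N := ltn_trans ij jlt.
  apply: (Hdist i j); first by rewrite ij jlt.
  apply: (K _ u).
    by apply: tors_sub; apply: Htor; apply: mem_nth.
  by rewrite colsubB -!(nth_map 0 0 (colsub g)).
have Hb : ((`|\det N|%N : int) <= torsion_bound r).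
  have H01q : forall i j, Nq i j = 0 \/ Nq i j = 1.
    by move=> i j; rewrite NqE !mxE; case: (H01 (f0 i) (g j)) => ->; [left|right].
  have Hq := det01_bound H01q; rewrite detNq in Hq.
  have Hint : (4 ^+ r * \det N ^+ 2 <= (r.+1)%:Z ^+ r.+1 :> int).
    rewrite -(ler_int rat) !rmorphM /= !rmorphXn /=.
    by rewrite -expr2; exact: Hq.
  rewrite /torsion_bound.
  set s := sqrtC _.
  have s0 : 0 <= s by rewrite sqrtC_ge0 ler0n.
  have tp : (0 : algC) < 2 ^+ r by rewrite exprn_gt0 // ltr0n.
  rewrite real_floor_ge_int; last first.
    by apply: ger0_real; rewrite mulr_ge0 ?exprn_ge0 // invr_ge0 ltW.
  rewrite -(ler_pM2l tp) mulrA mulfV ?gt_eqF // mul1r.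
  rewrite -ler_sqr ?nnegrE ?exprn_ge0 //; last first.
    exact: mulr_ge0 (ltW tp) (ler0n _ _).
  rewrite -exprM mulnC exprM sqrtCK exprMn -exprM mulnC exprM.
  have -> : ((`|\det N|%N : int)%:~R : algC) = `|(\det N)%:~R| by rewrite -intr_norm abszE.
  rewrite real_normK ?realz //.
  move: Hint; rewrite -(ler_int algC) rmorphM /= !rmorphXn /=.
  have -> : (2 : algC) ^+ 2 = 4%:~R by rewrite expr2 -natrM.
  by [].
apply: le_trans Hb; by rewrite lez_nat.
Qed.

Unset Implicit Arguments.

Theorem proposition2p15
  (L : splittingFieldType rat) (tau : {rmorphism L -> algC})
  (E : {subfield L})
  (iota : gal_of {:L}) (S : {set {set gal_of {:L}}}) :
  is_galois_closure E ->
  is_CM_field tau E ->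
  (forall x : L, tau (iota x) = (tau x)^*) ->
  is_CM_type ('Gal({:L} / 1%VS))%g ('Gal({:L} / E))%g iota S ->
  primitive_CM_type ('Gal({:L} / 1%VS))%g ('Gal({:L} / E))%g S ->
  forall r : nat,
    int_rank (reflex_norm_mx ('Gal({:L} / 1%VS))%g ('Gal({:L} / E))%g S) = r ->
    coker_torsion_order_le (reflex_norm_mx ('Gal({:L} / 1%VS))%g ('Gal({:L} / E))%g S)
      (torsion_bound r).
Proof.
move=> _ _ _ _ _ r <-; apply: main_gen => i j; rewrite mxE.
by case: (_ \in _); [right|left].
Qed.
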